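(* Let $\mathbb K$ be a commutative semiring with $0\ne1$ and let $S:\mathrm{TXT}(\Delta)\to K$ be a regular alternating text series. Then $\pi(S):\Delta^*\to K$ is an algebraic formal power series.
   Context: Texts: a text over a finite alphabet $\Delta$ is $(V,\lambda,\le_1,\le_2)$ with $V$ finite nonempty, $\lambda:V\to\Delta$, $\le_1,\le_2$ linear orders on $V$, up to isomorphism. $\tau\circ\tau'$ (resp. $\tau\bullet\tau'$): disjoint union, all of $\tau$ before all of $\tau'$ in $\le_1$, and in $\le_2$ all of $\tau$ before $\tau'$ (resp. all of $\tau'$ before $\tau$). $\mathrm{TXT}(\Delta)$ (alternating texts) is the set of texts generated from singleton texts by $\circ,\bullet$. Projection: $\pi(\tau)$ is the word of labels read along $\le_1$, and $\pi(S)(w)=\sum_{\tau\in\mathrm{TXT}(\Delta),\pi(\tau)=w}S(\tau)$ (so $0$ at $\varepsilon$). WPA: $\mathcal A=(H,V,\Omega,\mu,\mu_{op},\mu_{cl},\lambda,\gamma)$, $H,V$ disjoint finite sets, $\Omega$ finite, $\mu:(H\times\Delta\times H)\cup(V\times\Delta\times V)\to K$, $\mu_{op},\mu_{cl}:(H\times\Omega\times V)\cup(V\times\Omega\times H)\to K$, $\lambda,\gamma:H\cup V\to K$. Runs (with label, weight, initial/final state): (1) for $(q_1,q_2)\in(H\times H)\cup(V\times V)$, $a\in\Delta$, $(q_1,a,q_2)$ is a run from $q_1$ to $q_2$ with label $a$ and weight $\mu(q_1,a,q_2)$; (2) if runs $r_1,r_2$ satisfy final$(r_1)=$ initial$(r_2)=q$,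 then $r_1r_2$ is a run from initial$(r_1)$ to final$(r_2)$ with weight the product and label $\mathrm{lab}(r_1)\circ\mathrm{lab}(r_2)$ if $q\in H$, $\mathrm{lab}(r_1)\bullet\mathrm{lab}(r_2)$ if $q\in V$; (3) if $r$ is a run obtained by rule (2), from $p_1$ to $p_2$, with $p_1\in H$ (resp. $V$) and $q_1,q_2\in V$ (resp. $H$), $s\in\Omega$, then $(q_1,(_s,p_1)\,r\,(p_2,)_s,q_2)$ is a run from $q_1$ to $q_2$ with label $\mathrm{lab}(r)$ and weight $\mu_{op}(q_1,s,p_1)\mathrm{wt}(r)\mu_{cl}(p_2,s,q_2)$. $\|\mathcal A\|(\tau)=\sum_{q_1,q_2}\lambda(q_1)\sum_r\mathrm{wt}(r)\gamma(q_2)$ over runs from $q_1$ to $q_2$ labeled $\tau$. A series $\mathrm{TXT}(\Delta)\to K$ is regular if it is some $\|\mathcal A\|$. Algebraic series: formal power series are maps $\Delta^*\to K$ with pointwise sum/scalar product and Cauchy product $(S_1S_2)(w)=\sum_{w=w_1w_2}S_1(w_1)S_2(w_2)$; words identified with characteristic series. For a finite variable set $\mathcal X$ disjoint from $\Delta$, a polynomial is a finitely supported map $(\Delta\cup\mathcal X)^*\to K$; an algebraic system is $(P_X)_{X\in\mathcal X}$; a solution is $(S_X)$ with $S_X=\sum(P_X,u_1X_1\cdots u_kX_ku_{k+1})u_1S_{X_1}\cdots u_kS_{X_k}u_{k+1}$ over the support of $P_X$. Proper: $P_X(Y)=P_X(\varepsilon)=0$ for all $X,Y$; quasiregular: $S(\varepsilon)=0$.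 A proper system has exactly one quasiregular solution; algebraic series are its components for some proper system. *)

(* Defs.v *)
From mathcomp Require Import all_boot all_order all_algebra.
From Stdlib Require List.
Set Implicit Arguments. Unset Strict Implicit. Unset Printing Implicit Defensive.
Import GRing.Theory.
Local Open Scope ring_scope.

Definition fsum_is (K : nmodType) (T : Type) (P : T -> Prop) (f : T -> K) (k : K) :=
  exists l : seq T, List.NoDup l /\ (forall x, List.In x l <-> P x) /\
                    k = \sum_(x <- l) f x.

(* Texts up to isomorphism.  A text (V,lambda,<=1,<=2) with |V| = n is *)
(* represented canonically by numbering V as 0..n-1 along <=1:         *)
(*   tw = the word of labels read along <=1  (so pi(tau) = tw tau),    *)
(*   tp = the list of these indices read along <=2.                    *)
(* Two texts are isomorphic iff their representations are equal.      *)
Record text (D : Type) := Text { tw : seq D; tp : seq nat }.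

Definition shiftp (n : nat) (p : seq nat) := map (addn n) p.

Definition tsing (D : Type) (a : D) : text D := Text [:: a] [:: 0%N].

(* tau o tau' : tau before tau' in both orders *)
Definition tcomp (D : Type) (t1 t2 : text D) : text D :=
  Text (tw t1 ++ tw t2) (tp t1 ++ shiftp (size (tw t1)) (tp t2)).

(* tau . tau' : tau before tau' in <=1, tau' before tau in <=2 *)
Definition tbul (D : Type) (t1 t2 : text D) : text D :=
  Text (tw t1 ++ tw t2) (shiftp (size (tw t1)) (tp t2) ++ tp t1).

Inductive alt_text (D : Type) : text D -> Prop :=
  | alt_sing (a : D) : alt_text (tsing a)
  | alt_comp t1 t2 : alt_text t1 -> alt_text t2 -> alt_text (tcomp t1 t2)
  | alt_bul  t1 t2 : alt_text t1 -> alt_text t2 -> alt_text (tbul t1 t2).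

Definition proj_is (K : nmodType) (D : Type) (S : text D -> K) (T : seq D -> K) :=
  forall w : seq D, fsum_is (fun t : text D => alt_text t /\ tw t = w) S (T w).

(* Weighted pebble automata.  The state set is Q = H (disjoint union) V *)
(* with isH q = true iff q is in H.  The weight functions are given on  *)
(* all triples; only their values on the domains of the paper           *)
(* ((HxDxH) u (VxDxV) for mu, (HxOxV) u (VxOxH) for mu_op, mu_cl) are   *)
(* ever used by runs.                                                   *)
Record wpa (K : pzSemiRingType) (D : Type) := WPA {
  wQ : finType;
  wO : finType;
  isH : wQ -> bool;
  mu : wQ -> D -> wQ -> K;
  mu_op : wQ -> wO -> wQ -> K;
  mu_cl : wQ -> wO -> wQ -> K;
  lam : wQ -> K;
  gam : wQ -> K }.

(* Runs as terms: a run is a nonempty sequence (concatenation, rule 2) *)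
(* of blocks; a block is an atomic run (rule 1) or a bracketed run     *)
(* (q1,(_s,p1) r (p2,)_s,q2) (rule 3).                                  *)
Inductive block (Q D O : Type) :=
  | Atom (q1 : Q) (a : D) (q2 : Q)
  | Wrap (q1 : Q) (s : O) (p1 : Q) (r : run Q D O) (p2 q2 : Q)
with run (Q D O : Type) :=
  | One (b : block Q D O)
  | More (b : block Q D O) (r : run Q D O).

Arguments Atom {Q D O}. Arguments Wrap {Q D O}.
Arguments One {Q D O}. Arguments More {Q D O}.

Section Runs.
Variables (K : pzSemiRingType) (D : Type) (A : wpa K D).
Local Notation Q := (wQ A).
Local Notation O := (wO A).

Definition binit (b : block Q D O) : Q :=
  match b with Atom q1 _ _ => q1 | Wrap q1 _ _ _ _ _ => q1 end.
Definition bfin (b : block Q D O) : Q :=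
  match b with Atom _ _ q2 => q2 | Wrap _ _ _ _ _ q2 => q2 end.
Definition rinit (r : run Q D O) : Q :=
  match r with One b => binit b | More b _ => binit b end.
Fixpoint rfin (r : run Q D O) : Q :=
  match r with One b => bfin b | More _ r' => rfin r' end.

Definition by_rule2 (r : run Q D O) : Prop :=
  match r with One _ => False | More _ _ => True end.

Fixpoint bvalid (b : block Q D O) : Prop :=
  match b with
  | Atom q1 a q2 => isH q1 = isH q2
  | Wrap q1 s p1 r p2 q2 =>
      by_rule2 r /\ rvalid r /\ p1 = rinit r /\ p2 = rfin r /\
      isH q1 = ~~ isH p1 /\ isH q2 = ~~ isH p1
  end
with rvalid (r : run Q D O) : Prop :=
  match r with
  | One b => bvalid b
  | More b r' => bvalid b /\ rvalid r' /\ bfin b = rinit r'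
  end.

Fixpoint bwt (b : block Q D O) : K :=
  match b with
  | Atom q1 a q2 => mu q1 a q2
  | Wrap q1 s p1 r p2 q2 => mu_op q1 s p1 * rwt r * mu_cl p2 s q2
  end
with rwt (r : run Q D O) : K :=
  match r with
  | One b => bwt b
  | More b r' => bwt b * rwt r'
  end.

Fixpoint blab (b : block Q D O) : text D :=
  match b with
  | Atom _ a _ => tsing a
  | Wrap _ _ _ r _ _ => rlab r
  end
with rlab (r : run Q D O) : text D :=
  match r with
  | One b => blab b
  | More b r' => if isH (bfin b) then tcomp (blab b) (rlab r')
                 else tbul (blab b) (rlab r')
  end.

Definition behaviour_is (t : text D) (k : K) : Prop :=
  fsum_is (fun r : run Q D O => rvalid r /\ rlab r = t)
          (fun r => lam (rinit r) * rwt r * gam (rfin r)) k.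
End Runs.

Definition regular_text_series (K : pzSemiRingType) (D : Type) (S : text D -> K) :=
  exists A : wpa K D, forall t, alt_text t -> behaviour_is A t (S t).

Section Series.
Variables (K : pzSemiRingType) (D : eqType).
Definition series := seq D -> K.

Definition ser_word (u : seq D) : series := fun w => (w == u)%:R.
Definition ser_add (S1 S2 : series) : series := fun w => S1 w + S2 w.
Definition ser_scale (c : K) (S1 : series) : series := fun w => c * S1 w.
Definition ser_mul (S1 S2 : series) : series :=
  fun w => \sum_(i < (size w).+1) S1 (take i w) * S2 (drop i w).

(* polynomial over variables X: finitely supported map (D u X)^* -> K *)
Record poly_sys (X : finType) := Poly {
  pcoef : seq (D + X)%type -> K;
  psupp : seq (seq (D + X)%type);
  psupp_uniq : uniq psupp;
  psupp_ok : forall u, pcoef u != 0 -> u \in psupp }.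

Definition eval_mono (X : finType) (SX : X -> series) (u : seq (D + X)%type) : series :=
  foldr (fun x acc => ser_mul (match x with inl a => ser_word [:: a] | inr Y => SX Y end) acc)
        (ser_word [::]) u.

Definition is_solution (X : finType) (P : X -> poly_sys X) (SX : X -> series) :=
  forall (Y : X) (w : seq D),
    SX Y w = \sum_(u <- psupp (P Y)) pcoef (P Y) u * eval_mono SX u w.

Definition proper_sys (X : finType) (P : X -> poly_sys X) :=
  forall Y Z : X, pcoef (P Y) [:: inr Z] = 0 /\ pcoef (P Y) [::] = 0.

Definition quasiregular (T : series) := T [::] = 0.

Definition algebraic (T : series) :=
  exists (X : finType) (P : X -> poly_sys X) (SX : X -> series) (X0 : X),
    proper_sys P /\ is_solution P SX /\ (forall Y, quasiregular (SX Y)) /\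
    T = SX X0.
End Series.

(* Main.v *)
Require Import Defs.
From HB Require Import structures.
From mathcomp Require Import all_boot all_order all_algebra.
From mathcomp Require Import zify.
From Stdlib Require Import Lia.
From Stdlib Require ClassicalEpsilon List.
Set Implicit Arguments. Unset Strict Implicit. Unset Printing Implicit Defensive.
Import GRing.Theory.
Local Open Scope ring_scope.

Definition dec (P : Prop) : bool :=
  if ClassicalEpsilon.excluded_middle_informative P then true else false.
Lemma decR (P : Prop) : reflect P (dec P).
Proof. by rewrite /dec; case: ClassicalEpsilon.excluded_middle_informative => h; constructor. Qed.

Section Gen.
Variable (K : nmodType).

Lemma sum_same (T : eqType) (l1 l2 : seq T) (f : T -> K) :
  uniq l1 -> uniq l2 -> (forall x, (x \in l1) = (x \in l2)) ->
  \sum_(x <- l1) f x = \sum_(x <- l2) f x.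
Proof. by move=> u1 u2 e; apply: perm_big; apply: uniq_perm. Qed.

Lemma sum_pred1 (T : eqType) (l : seq T) (x : T) (F : T -> K) :
  uniq l -> x \in l -> \sum_(y <- l | y == x) F y = F x.
Proof.
move=> u xl; rewrite -big_filter.
have -> : [seq y <- l | y == x] = [:: x].
  by rewrite -(filter_pred1_uniq u xl); apply: eq_filter => y /=.
by rewrite big_seq1.
Qed.

Lemma sum_partition (T U : eqType) (l : seq T) (ks : seq U) (key : T -> U) (f : T -> K) :
  uniq ks -> (forall x, x \in l -> key x \in ks) ->
  \sum_(x <- l) f x = \sum_(k <- ks) \sum_(x <- l | key x == k) f x.
Proof.
move=> uk hk.
under [RHS]eq_bigr do rewrite big_mkcond.
rewrite exchange_big /= big_seq [RHS]big_seq; apply: eq_bigr => x xl.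
rewrite -big_mkcond /=.
rewrite (eq_bigl (fun k => k == key x)); first by rewrite (sum_pred1 (fun _ => f x)) ?hk.
by move=> k; rewrite eq_sym.
Qed.

Lemma uniq_NoDup (T : eqType) (l : seq T) : uniq l -> List.NoDup l.
Proof.
elim: l => [|x l IH] /=; first by constructor.
case/andP=> xl ul; constructor; last exact: IH.
move=> h; move/negP: xl; apply; elim: l h {IH ul} => //= y l IH [->|h].
  by rewrite inE eqxx.
by rewrite inE IH ?orbT.
Qed.

Lemma In_mem (T : eqType) (l : seq T) x : List.In x l <-> x \in l.
Proof.
elim: l => [|y l IH] //=; rewrite inE; split.
  by case=> [->|/IH ->]; rewrite ?eqxx ?orbT.
by case/orP=> [/eqP ->|/IH]; [left|right].
Qed.

Lemma NoDup_uniq (T : eqType) (l : seq T) : List.NoDup l -> uniq l.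
Proof.
elim=> //= x l' nx nd ->; rewrite andbT; apply/negP => /In_mem; exact: nx.
Qed.
End Gen.

Section RunEq.
Variables (Q D O : eqType).
Fixpoint beqb (b1 b2 : block Q D O) {struct b1} : bool :=
  match b1, b2 with
  | Atom q1 a q2, Atom q1' a' q2' => [&& q1 == q1', a == a' & q2 == q2']
  | Defs.Wrap q1 s p1 r p2 q2, Defs.Wrap q1' s' p1' r' p2' q2' =>
      [&& q1 == q1', s == s', p1 == p1', reqb r r', p2 == p2' & q2 == q2']
  | _, _ => false end
with reqb (r1 r2 : run Q D O) {struct r1} : bool :=
  match r1, r2 with
  | One b, One b' => beqb b b'
  | More b r, More b' r' => beqb b b' && reqb r r'
  | _, _ => false end.

Scheme block_ind2 := Induction for block Sort Prop
with run_ind2 := Induction for run Sort Prop.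
Combined Scheme br_ind from block_ind2, run_ind2.

Lemma beq_ok : (forall b1 b2, beqb b1 b2 <-> b1 = b2) /\
               (forall r1 r2, reqb r1 r2 <-> r1 = r2).
Proof.
apply: br_ind.
- move=> q1 a q2 [q1' a' q2'|] /=; last by [].
  by split=> [/and3P[/eqP-> /eqP-> /eqP->]|[-> -> ->]] //; rewrite !eqxx.
- move=> q1 s p1 r IH p2 q2 [|q1' s' p1' r' p2' q2'] /=; first by [].
  split=> [/and5P[/eqP-> /eqP-> /eqP-> /IH-> /andP[/eqP-> /eqP->]]//|[<- <- <- <- <- <-]].
  by rewrite !eqxx (proj2 (IH r)).
- move=> b IH [b'|b' r'] /=; last by [].
  by split=> [/IH->|[<-]] //; apply/IH.
- move=> b IHb r IHr [b'|b' r'] /=; first by [].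
  split=> [/andP[/IHb-> /IHr->]|[<- <-]] //.
  by rewrite (proj2 (IHb b)) // (proj2 (IHr r)).
Qed.

Lemma beqbP : Equality.axiom beqb.
Proof. by move=> x y; case: (proj1 beq_ok x y) => h1 h2; apply: (iffP idP). Qed.
Lemma reqbP : Equality.axiom reqb.
Proof. by move=> x y; case: (proj2 beq_ok x y) => h1 h2; apply: (iffP idP). Qed.

HB.instance Definition _ := hasDecEq.Build (block Q D O) beqbP.
HB.instance Definition _ := hasDecEq.Build (run Q D O) reqbP.
End RunEq.
Section TextEq.
Variable D : eqType.
Definition teq (t1 t2 : text D) := (tw t1 == tw t2) && (tp t1 == tp t2).
Lemma teqP : Equality.axiom teq.
Proof.
move=> [w p] [w' p']; rewrite /teq /=.
by apply: (iffP andP) => [[/eqP-> /eqP->]|[-> ->]].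
Qed.
HB.instance Definition _ := hasDecEq.Build (text D) teqP.
End TextEq.

Section Main.
Variables (K : comNzSemiRingType) (D : finType) (A : wpa K D).
Local Notation Q := (wQ A).
Local Notation O := (wO A).
Local Notation blk := (block Q D O).
Local Notation rn := (run Q D O).

Fixpoint byield (b : blk) : seq D :=
  match b with Atom _ a _ => [:: a] | Defs.Wrap _ _ _ r _ _ => ryield r end
with ryield (r : rn) : seq D :=
  match r with One b => byield b | More b r' => byield b ++ ryield r' end.

Lemma yield_facts :
  (forall b : blk, [/\ tw (blab b) = byield b, alt_text (blab b) & (0 < size (byield b))%N]) /\
  (forall r : rn, [/\ tw (rlab r) = ryield r, alt_text (rlab r) & (0 < size (ryield r))%N]).
Proof.
apply: br_ind => /=.
- by move=> q1 a q2; split=> //; constructor.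
- by move=> q1 s p1 r [h1 h2 h3] p2 q2; split.
- by move=> b [h1 h2 h3]; split.
- move=> b [h1 h2 h3] r [h4 h5 h6]; rewrite size_cat addn_gt0 h3.
  by case: ifP => _ /=; rewrite ?h1 ?h4; split=> //; constructor.
Qed.

Definition splits (w : seq D) := iota 1 (size w).-1.

Definition CBg (cm : seq D -> seq rn) (w : seq D) : seq blk :=
  (if w is [:: a] then [seq Atom c.1 a c.2 | c <- enum {: Q * Q}] else [::]) ++
  [seq Defs.Wrap c.1.1.1.1 c.1.1.1.2 c.1.1.2 r c.1.2 c.2 | c <- enum {: Q * O * Q * Q * Q}, r <- cm w].
Definition CRg (cm : seq D -> seq rn) (w : seq D) : seq rn := map One (CBg cm w) ++ cm w.
Fixpoint CM (n : nat) (w : seq D) : seq rn :=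
  match n with 0 => [::] | n'.+1 =>
    flatten [seq [seq More b r | b <- CBg (CM n') (take i w), r <- CRg (CM n') (drop i w)] | i <- splits w]
  end.

Lemma notin_mapOne (r : rn) (l : seq blk) : by_rule2 r -> (r \in map One l) = false.
Proof. by case: r => // b r' _; apply/negP => /mapP[x _]. Qed.

Lemma cand_ok :
  (forall b : blk, bvalid b -> forall n, (size (byield b) <= n)%N -> b \in CBg (CM n) (byield b)) /\
  (forall r : rn, rvalid r -> forall n, (size (ryield r) <= n)%N -> r \in CRg (CM n) (ryield r)).
Proof.
apply: br_ind => /=.
- move=> q1 a q2 _ n _; rewrite mem_cat; apply/orP; left.
  by apply/mapP; exists (q1, q2); rewrite ?mem_enum.
- move=> q1 s p1 r IH p2 q2 [hr [vr _]] n hn.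
  have := IH vr n hn; rewrite /CRg mem_cat notin_mapOne //= => hm.
  rewrite mem_cat; apply/orP; right; apply/allpairsP.
  by exists ((q1, s, p1, p2, q2), r); rewrite mem_enum.
- move=> b IH vb n hn; rewrite /CRg mem_cat; apply/orP; left.
  by rewrite mem_map; [apply: IH|move=> x y []].
- move=> b IHb r IHr [vb [vr _]].
  case: ((proj1 yield_facts) b) => _ _ pb; case: ((proj2 yield_facts) r) => _ _ pr.
  case=> [|n] hn.
    by move: hn; rewrite size_cat leqn0 addn_eq0 => /andP[/eqP hb _]; move: pb; rewrite hb.
  rewrite /CRg mem_cat; apply/orP; right => /=.
  have hb : (size (byield b) <= n)%N.
    by move: hn; rewrite size_cat; lia.
  have hr : (size (ryield r) <= n)%N.
    by move: hn; rewrite size_cat; lia.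
  apply/flattenP; exists [seq More x y | x <- CBg (CM n) (byield b), y <- CRg (CM n) (ryield r)].
    apply/mapP; exists (size (byield b)); last by rewrite take_size_cat // drop_size_cat.
    rewrite mem_iota size_cat.
    by move: pb pr; lia.
  by apply/allpairsP; exists (b, r); split => //; [apply: IHb|apply: IHr].
Qed.

Definition LB (w : seq D) := undup (CBg (CM (size w)) w).
Definition LR (w : seq D) := undup (CRg (CM (size w)) w).

Lemma inLB (b : blk) w : bvalid b -> byield b = w -> b \in LB w.
Proof. by move=> vb <-; rewrite mem_undup; apply: (proj1 cand_ok). Qed.
Lemma inLR (r : rn) w : rvalid r -> ryield r = w -> r \in LR w.
Proof. by move=> vr <-; rewrite mem_undup; apply: (proj2 cand_ok). Qed.

Definition Bl p q w := [seq b <- LB w | dec (bvalid b /\ byield b = w /\ binit b = p /\ bfin b = q)].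
Definition Ml p q w := [seq r <- LR w | dec (rvalid r /\ by_rule2 r /\ ryield r = w /\ rinit r = p /\ rfin r = q)].
Definition Rl p q w := [seq r <- LR w | dec (rvalid r /\ ryield r = w /\ rinit r = p /\ rfin r = q)].
Definition Xl w := [seq r <- LR w | dec (rvalid r /\ ryield r = w)].

Lemma mem_Bl p q w b : b \in Bl p q w <-> (bvalid b /\ byield b = w /\ binit b = p /\ bfin b = q).
Proof.
rewrite mem_filter; split; first by case/andP => /decR.
by move=> h; apply/andP; split; [apply/decR|apply: inLB; case: h => [? [? _]]].
Qed.
Lemma mem_Ml p q w r : r \in Ml p q w <-> (rvalid r /\ by_rule2 r /\ ryield r = w /\ rinit r = p /\ rfin r = q).
Proof.
rewrite mem_filter; split; first by case/andP => /decR.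
by move=> h; apply/andP; split; [apply/decR|apply: inLR; case: h => [? [? [? _]]]].
Qed.
Lemma mem_Rl p q w r : r \in Rl p q w <-> (rvalid r /\ ryield r = w /\ rinit r = p /\ rfin r = q).
Proof.
rewrite mem_filter; split; first by case/andP => /decR.
by move=> h; apply/andP; split; [apply/decR|apply: inLR; case: h => [? [? _]]].
Qed.
Lemma mem_Xl w r : r \in Xl w <-> (rvalid r /\ ryield r = w).
Proof.
rewrite mem_filter; split; first by case/andP => /decR.
by move=> h; apply/andP; split; [apply/decR|apply: inLR; case: h].
Qed.

Lemma uniq_Bl p q w : uniq (Bl p q w). Proof. by rewrite filter_uniq ?undup_uniq. Qed.
Lemma uniq_Ml p q w : uniq (Ml p q w). Proof. by rewrite filter_uniq ?undup_uniq. Qed.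
Lemma uniq_Rl p q w : uniq (Rl p q w). Proof. by rewrite filter_uniq ?undup_uniq. Qed.
Lemma uniq_Xl w : uniq (Xl w). Proof. by rewrite filter_uniq ?undup_uniq. Qed.

Definition Bs p q : series K D := fun w => \sum_(b <- Bl p q w) bwt b.
Definition Ms p q : series K D := fun w => \sum_(r <- Ml p q w) rwt r.
Definition Rs p q : series K D := fun w => \sum_(r <- Rl p q w) rwt r.
Definition Xs : series K D := fun w => \sum_(r <- Xl w) lam (rinit r) * rwt r * gam (rfin r).

Lemma bpos (b : blk) : (0 < size (byield b))%N.
Proof. by case: ((proj1 yield_facts) b). Qed.
Lemma rpos (r : rn) : (0 < size (ryield r))%N.
Proof. by case: ((proj2 yield_facts) r). Qed.

Lemma Bs0 p q : Bs p q [::] = 0.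
Proof. by apply: big1_seq => b /andP[_ /mem_Bl [_ [h _]]]; move: (bpos b); rewrite h. Qed.
Lemma Ms0 p q : Ms p q [::] = 0.
Proof. by apply: big1_seq => b /andP[_ /mem_Ml [_ [_ [h _]]]]; move: (rpos b); rewrite h. Qed.
Lemma Rs0 p q : Rs p q [::] = 0.
Proof. by apply: big1_seq => b /andP[_ /mem_Rl [_ [h _]]]; move: (rpos b); rewrite h. Qed.
Lemma Xs0 : Xs [::] = 0.
Proof. by apply: big1_seq => b /andP[_ /mem_Xl [_ h]]; move: (rpos b); rewrite h. Qed.

Lemma Rs_split p q w : Rs p q w = Bs p q w + Ms p q w.
Proof.
rewrite /Rs /Bs /Ms -(big_map One xpredT (@rwt _ _ A)) -big_cat /=.
apply: sum_same; first exact: uniq_Rl.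
  rewrite cat_uniq map_inj_uniq ?uniq_Bl ?uniq_Ml; last by move=> x y [].
  by rewrite andbT; apply/hasPn => r /mem_Ml [_ [h _]]; rewrite notin_mapOne.
move=> r; apply/idP/idP.
  move/mem_Rl => [vr [yr [ir fr]]]; rewrite mem_cat; case: r vr yr ir fr => [b|b r'] /= vr yr ir fr.
    by rewrite mem_map ?(proj2 (mem_Bl _ _ _ _)) //; move=> x y [].
  by apply/orP; right; apply/mem_Ml.
rewrite mem_cat => /orP[/mapP[b /mem_Bl [vb [yb [ib fb]]] ->]|/mem_Ml [vr [_ h]]]; apply/mem_Rl => //.
Qed.

Lemma Xs_split w : Xs w = \sum_(c <- enum {: Q * Q}) lam c.1 * gam c.2 * Rs c.1 c.2 w.
Proof.
rewrite /Xs (sum_partition (ks := enum {: Q * Q}) (key := fun r => (rinit r, rfin r))); last 2 first.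
- by rewrite enum_uniq.
- by move=> r _; rewrite mem_enum.
apply: eq_bigr => [[p q]] _ /=.
rewrite /Rs mulr_sumr.
transitivity (\sum_(r <- Xl w | (rinit r, rfin r) == (p, q)) lam p * gam q * rwt r).
  by apply: eq_bigr => r /eqP [-> ->]; rewrite mulrAC.
rewrite -big_filter; apply: sum_same.
- by rewrite filter_uniq ?uniq_Xl.
- exact: uniq_Rl.
move=> r; rewrite mem_filter; apply/idP/idP.
  by case/andP => /eqP [ir fr] /mem_Xl [vr yr]; apply/mem_Rl.
by move/mem_Rl => [vr [yr [ir fr]]]; rewrite ir fr eqxx /=; apply/mem_Xl.
Qed.

Lemma trim_sum (n : nat) (F : nat -> K) : F 0%N = 0 -> F n = 0 ->
  \sum_(k < n.+1) F k = \sum_(1 <= i < n) F i.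
Proof.
move=> h0 hn; rewrite -(big_mkord xpredT F) big_ltn // h0 add0r.
case: n hn => [|n] hn; first by rewrite !big_geq.
by rewrite big_nat_recr //= hn addr0.
Qed.

Definition mkey (r : rn) : nat * Q :=
  match r with More b _ => (size (byield b), bfin b) | One b => (0%N, bfin b) end.

Lemma Ms_split p q w : Ms p q w = \sum_(m <- enum {: Q}) ser_mul (Bs p m) (Rs m q) w.
Proof.
rewrite /Ms (sum_partition (ks := [seq (i, m) | i <- index_iota 1 (size w), m <- enum {: Q}]) (key := mkey)); last 2 first.
- by rewrite allpairs_uniq ?iota_uniq ?enum_uniq // => [[? ?] [? ?]] _ _ /= [-> ->].
- move=> [b|b r] /mem_Ml [vr [//= _ [yr _]]]; apply/allpairsP; exists (size (byield b), bfin b).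
  rewrite mem_enum mem_iota -yr size_cat; split => //.
  by rewrite /=; move: (bpos b) (rpos r); lia.
rewrite big_allpairs.
transitivity (\sum_(i <- index_iota 1 (size w)) \sum_(m <- enum {: Q}) Bs p m (take i w) * Rs m q (drop i w)).
  rewrite big_seq [RHS]big_seq; apply: eq_bigr => i; change nat in i; rewrite mem_iota => /andP[i1 i2].
  apply: eq_bigr => m _; rewrite -big_filter.
  transitivity (\sum_(x <- [seq More b r | b <- Bl p m (take i w), r <- Rl m q (drop i w)]) rwt x).
    apply: sum_same.
    - by rewrite filter_uniq ?uniq_Ml.
    - by rewrite allpairs_uniq ?uniq_Bl ?uniq_Rl // => [[? ?] [? ?]] _ _ /= [-> ->].
    move=> r; rewrite mem_filter; apply/idP/idP.
      case/andP; case: r => [b|b r] /=.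
        by move=> _ /mem_Ml [_ [//]].
      move=> /eqP [ib fb] /mem_Ml [[vb [vr e]] [_ [yr [ir fr]]]].
      apply/allpairsP; exists (b, r); split => //=.
        by apply/mem_Bl; rewrite -yr -ib take_size_cat.
      by apply/mem_Rl; rewrite -yr -ib drop_size_cat // -e.
    move/allpairsP => [[b r0] [/= /mem_Bl [vb [yb [ib fb]]] /mem_Rl [vr [yr [ir fr]]] ->]].
    have si : size (byield b) = i.
      rewrite yb size_take; case: ltnP => // h.
      move: i1 i2 h; case: (size w) => [|n] /=; lia.
    rewrite /= si fb eqxx /=; apply/mem_Ml; split; first by split => //; split => //; rewrite fb ir.
    by split => //=; rewrite yb yr cat_take_drop.
  rewrite big_allpairs_dep /= big_distrlr /=.
  by apply: eq_bigr => b _; apply: eq_bigr.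
rewrite exchange_big; apply: eq_bigr => m _.
rewrite /ser_mul (trim_sum (F := fun k => Bs p m (take k w) * Rs m q (drop k w))) //=; first by rewrite take0 Bs0 mul0r.
by rewrite drop_size Rs0 mulr0.
Qed.

Definition bcond (q1 q2 : Q) (c : O * Q * Q) := (isH q1 == ~~ isH c.1.2) && (isH q2 == ~~ isH c.1.2).
Definition bkey (b : blk) : option (O * Q * Q) :=
  match b with Atom _ _ _ => None | Defs.Wrap _ s p1 _ p2 _ => Some (s, p1, p2) end.

Lemma Bs_split q1 q2 w : Bs q1 q2 w =
  \sum_(a <- enum {: D}) (isH q1 == isH q2)%:R * mu q1 a q2 * (w == [:: a])%:R +
  \sum_(c <- enum {: O * Q * Q}) (bcond q1 q2 c)%:R * (mu_op q1 c.1.1 c.1.2 * mu_cl c.2 c.1.1 q2) * Ms c.1.2 c.2 w.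
Proof.
rewrite /Bs (sum_partition (ks := None :: map Some (enum {: O * Q * Q})) (key := bkey)); last 2 first.
- rewrite /= map_inj_uniq ?enum_uniq; last by move=> x y [].
  by rewrite andbT; apply/negP => /mapP[].
- by move=> [q1' a q2'|q1' s p1 r p2 q2'] _ //=; rewrite inE map_f ?mem_enum ?orbT.
rewrite big_cons big_map; congr (_ + _).
  rewrite -big_filter.
  transitivity (\sum_(x <- [seq Atom q1 a q2 | a <- enum {: D} & (isH q1 == isH q2) && (w == [:: a])]) bwt x).
    apply: sum_same.
    - by rewrite filter_uniq ?uniq_Bl.
    - by rewrite map_inj_uniq ?filter_uniq -?enumT ?enum_uniq // => x y [].
    move=> b; rewrite mem_filter; apply/idP/idP.
      case/andP; case: b => [q1' a q2'|] //= _ /mem_Bl [/= v [yb [e1 e2]]].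
      rewrite -e1 -e2 -yb; apply/mapP; exists a => //.
      by rewrite mem_filter mem_enum v !eqxx.
    case/mapP => a; rewrite mem_filter => /andP[/andP[/eqP v /eqP ->] _] ->.
    by apply/andP; split => //; apply/mem_Bl.
  rewrite big_map big_filter big_mkcond; apply: eq_bigr => a _ /=.
  by case: (isH q1 == isH q2); case: (w == [:: a]); rewrite /= ?mul1r ?mulr1 ?mul0r ?mulr0.
apply: eq_bigr => [[[s p1] p2]] _ /=.
rewrite -big_filter.
transitivity (\sum_(x <- if bcond q1 q2 (s, p1, p2) then map (fun r => Defs.Wrap q1 s p1 r p2 q2) (Ml p1 p2 w) else [::]) bwt x).
  apply: sum_same.
  - by rewrite filter_uniq ?uniq_Bl.
  - by case: ifP => // _; rewrite map_inj_uniq ?uniq_Ml // => x y [].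
  move=> b; rewrite mem_filter; apply/idP/idP.
    case/andP; case: b => [|q1' s' p1' r p2' q2'] //= /eqP [<- <- <-].
    move=> /mem_Bl [/= [br [vr [e1 [e2 [h1 h2]]]]] [yr [<- <-]]].
    rewrite /bcond /= h1 h2 !eqxx /=.
    by apply/mapP; exists r => //; apply/mem_Ml; rewrite -e1 -e2.
  case: ifP => // /andP[/eqP h1 /eqP h2] /mapP[r /mem_Ml [vr [br [yr [ir fr]]]] ->].
  by rewrite /= eqxx /=; apply/mem_Bl.
case: ifP => _ /=; last by rewrite big_nil mulr0n !mul0r.
rewrite mulr1n.
rewrite big_map mul1r mulr_sumr; apply: eq_bigr => r _ /=.
by rewrite mulrAC.
Qed.

Local Notation X := (option (bool * Q * Q)).

Lemma mk_ok (L : seq (K * seq (D + X)%type)) u :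
  (\sum_(x <- L) x.1 * (x.2 == u)%:R) != 0 -> u \in undup (map snd L).
Proof.
apply: contraR; rewrite mem_undup => nu; rewrite big1_seq // => x /andP[_ xL].
have h : x.2 != u by apply: contraNneq nu => <-; exact: map_f.
by rewrite (negbTE h) mulr0n mulr0.
Qed.

Definition mkpoly (L : seq (K * seq (D + X)%type)) : poly_sys K D X :=
  @Defs.Poly K D X (fun u => \sum_(x <- L) x.1 * (x.2 == u)%:R) (undup (map snd L)) (undup_uniq _) (@mk_ok L).

Lemma mkpoly_eval (L : seq (K * seq (D + X)%type)) (g : seq (D + X)%type -> K) :
  \sum_(u <- psupp (mkpoly L)) pcoef (mkpoly L) u * g u = \sum_(x <- L) x.1 * g x.2.
Proof.
rewrite /=; under eq_bigr do rewrite mulr_suml.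
rewrite exchange_big; apply: eq_big_seq => x xL /=.
rewrite (bigD1_seq x.2) ?undup_uniq ?mem_undup ?map_f //= eqxx mulr1n mulr1 big1 ?addr0 //.
by move=> u; rewrite eq_sym => /negbTE ->; rewrite mulr0n mulr0 mul0r.
Qed.

Definition vB (p q : Q) : X := Some (true, p, q).
Definition vM (p q : Q) : X := Some (false, p, q).
Definition LMl (p q : Q) : seq (K * seq (D + X)%type) :=
  [seq (1, [:: inr (vB p m); inr (vB m q)]) | m <- enum {: Q}] ++
  [seq (1, [:: inr (vB p m); inr (vM m q)]) | m <- enum {: Q}].
Definition LBl (q1 q2 : Q) : seq (K * seq (D + X)%type) :=
  [seq ((isH q1 == isH q2)%:R * mu q1 a q2, [:: inl a]) | a <- enum {: D}] ++
  flatten [seq [seq ((bcond q1 q2 c)%:R * (mu_op q1 c.1.1 c.1.2 * mu_cl c.2 c.1.1 q2) * x.1, x.2)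
               | x <- LMl c.1.2 c.2] | c <- enum {: O * Q * Q}].
Definition LXl : seq (K * seq (D + X)%type) :=
  flatten [seq [seq (lam c.1 * gam c.2 * x.1, x.2) | x <- LBl c.1 c.2 ++ LMl c.1 c.2] | c <- enum {: Q * Q}].
Definition Lof (Y : X) := match Y with None => LXl | Some (true, p, q) => LBl p q | Some (false, p, q) => LMl p q end.
Definition Psys (Y : X) : poly_sys K D X := mkpoly (Lof Y).
Definition SX (Y : X) : series K D :=
  match Y with None => Xs | Some (true, p, q) => Bs p q | Some (false, p, q) => Ms p q end.

Definition EL (L : seq (K * seq (D + X)%type)) (w : seq D) := \sum_(x <- L) x.1 * eval_mono SX x.2 w.

Lemma ser_mul_nil_r (S : series K D) w : ser_mul S (@ser_word K D [::]) w = S w.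
Proof.
rewrite /ser_mul big_ord_recr /= drop_size take_size /ser_word eqxx mulr1 big1 ?add0r //.
move=> i _; case: eqP => [h|_]; last by rewrite mulr0n mulr0.
by move: (ltn_ord i) (congr1 size h); rewrite size_drop /=; lia.
Qed.

Lemma ev_atom a w : eval_mono SX [:: inl a] w = (w == [:: a])%:R.
Proof. by rewrite /eval_mono /= ser_mul_nil_r. Qed.

Lemma ev_pair Y Z w : eval_mono SX [:: inr Y; inr Z] w = ser_mul (SX Y) (SX Z) w.
Proof. rewrite /eval_mono /= /ser_mul; apply: eq_bigr => i _; congr (_ * _); exact: ser_mul_nil_r. Qed.

Lemma EL_M p q w : EL (LMl p q) w = Ms p q w.
Proof.
rewrite /EL big_cat !big_map /= -big_split /= Ms_split -enumT; apply: eq_bigr => m _.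
have := ev_pair (vB p m) (vB m q) w; rewrite /= => ->.
have := ev_pair (vB p m) (vM m q) w; rewrite /= => ->.
rewrite !mul1r /ser_mul -big_split /=; apply: eq_bigr => i _.
by rewrite Rs_split mulrDr.
Qed.

Lemma EL_B q1 q2 w : EL (LBl q1 q2) w = Bs q1 q2 w.
Proof.
rewrite /EL big_cat !big_map /= Bs_split; congr (_ + _).
  by rewrite -enumT; apply: eq_bigr => a _; rewrite ser_mul_nil_r.
rewrite big_allpairs_dep; apply: eq_bigr => c _.
rewrite -EL_M /EL mulr_sumr; apply: eq_bigr => x _ /=; exact: esym (mulrA _ _ _).
Qed.

Lemma EL_X w : EL LXl w = Xs w.
Proof.
rewrite /EL big_flatten big_map Xs_split; apply: eq_bigr => c _.
rewrite big_map Rs_split -EL_B -EL_M /EL -big_cat mulr_sumr /=.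
by apply: eq_bigr => x _; rewrite mulrA.
Qed.

Lemma SX_sol : is_solution Psys SX.
Proof.
move=> Y w; rewrite mkpoly_eval -/(EL (Lof Y) w).
by case: Y => [[[[] p] q]|] /=; rewrite ?EL_B ?EL_M ?EL_X.
Qed.

Definition goodm (u : seq (D + X)%type) :=
  match u with [:: inl _] => true | [:: inr _; inr _] => true | _ => false end.

Lemma goodM p q x : x \in LMl p q -> goodm x.2.
Proof. by rewrite mem_cat => /orP[] /mapP[m _ ->]. Qed.
Lemma goodB p q x : x \in LBl p q -> goodm x.2.
Proof.
rewrite mem_cat => /orP[/mapP[a _ ->] //|/flattenP[l /mapP[c _ ->] /mapP[y /goodM h ->]]] //.
Qed.
Lemma goodL Y x : x \in Lof Y -> goodm x.2.
Proof.
case: Y => [[[[] p] q]|] /=; [exact: goodB|exact: goodM|].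
move=> /flattenP[l /mapP[c _ ->] /mapP[y]]; rewrite mem_cat => /orP[/goodB|/goodM] h ->//.
Qed.

Lemma Psys_proper : proper_sys Psys.
Proof.
have H : forall Y u, ~~ goodm u -> pcoef (Psys Y) u = 0.
  move=> Y u gu; apply: big1_seq => x /andP[_ /goodL gx].
  by case: eqP => [e|_]; [move: gu; rewrite -e gx|rewrite mulr0n mulr0].
by move=> Y Z; split; apply: H.
Qed.

Fixpoint TC (n : nat) (w : seq D) : seq (text D) :=
  match n with 0 => [::] | n'.+1 =>
    (if w is [:: a] then [:: tsing a] else [::]) ++
    flatten [seq [seq tcomp t1 t2 | t1 <- TC n' (take i w), t2 <- TC n' (drop i w)] ++
                 [seq tbul t1 t2 | t1 <- TC n' (take i w), t2 <- TC n' (drop i w)] | i <- splits w]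
  end.

Lemma alt_pos (t : text D) : alt_text t -> (0 < size (tw t))%N.
Proof. by elim=> //= t1 t2 _ h1 _ h2; rewrite size_cat addn_gt0 h1. Qed.

Lemma TC_ok (t : text D) : alt_text t -> forall n, (size (tw t) <= n)%N -> t \in TC n (tw t).
Proof.
elim=> [a|t1 t2 a1 IH1 a2 IH2|t1 t2 a1 IH1 a2 IH2] [|n] //= hn.
- by rewrite inE eqxx.
- by move: hn (alt_pos a1); rewrite size_cat; lia.
- have p1 := alt_pos a1; have p2 := alt_pos a2.
  rewrite mem_cat; apply/orP; right; apply/flattenP.
  exists ([seq tcomp x y | x <- TC n (tw t1), y <- TC n (tw t2)] ++
          [seq tbul x y | x <- TC n (tw t1), y <- TC n (tw t2)]).
    apply/mapP; exists (size (tw t1)); last by rewrite take_size_cat // drop_size_cat.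
    by rewrite mem_iota size_cat; move: p1 p2; lia.
  rewrite mem_cat; apply/orP; left; apply/allpairsP; exists (t1, t2); split => //.
    by apply: IH1; move: hn; rewrite size_cat; lia.
  by apply: IH2; move: hn; rewrite size_cat; lia.
- by move: hn (alt_pos a1); rewrite size_cat; lia.
- have p1 := alt_pos a1; have p2 := alt_pos a2.
  rewrite mem_cat; apply/orP; right; apply/flattenP.
  exists ([seq tcomp x y | x <- TC n (tw t1), y <- TC n (tw t2)] ++
          [seq tbul x y | x <- TC n (tw t1), y <- TC n (tw t2)]).
    apply/mapP; exists (size (tw t1)); last by rewrite take_size_cat // drop_size_cat.
    by rewrite mem_iota size_cat; move: p1 p2; lia.
  rewrite mem_cat; apply/orP; right; apply/allpairsP; exists (t1, t2); split => //.
    by apply: IH1; move: hn; rewrite size_cat; lia.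
  by apply: IH2; move: hn; rewrite size_cat; lia.
Qed.

Definition TL (w : seq D) := [seq t <- undup (TC (size w) w) | dec (alt_text t /\ tw t = w)].

Lemma mem_TL w t : t \in TL w <-> (alt_text t /\ tw t = w).
Proof.
rewrite mem_filter; split; first by case/andP => /decR.
move=> h; apply/andP; split; first by apply/decR.
by case: h => a <-; rewrite mem_undup; apply: TC_ok.
Qed.

Lemma uniq_TL w : uniq (TL w). Proof. by rewrite filter_uniq ?undup_uniq. Qed.

Lemma Xs_proj (S : text D -> K) : (forall t, alt_text t -> behaviour_is A t (S t)) ->
  forall w, Xs w = \sum_(t <- TL w) S t.
Proof.
move=> HA w.
rewrite /Xs (sum_partition (ks := TL w) (key := fun r => rlab r)); last 2 first.
- exact: uniq_TL.
- move=> r /mem_Xl [vr yr]; apply/mem_TL.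
  by case: ((proj2 yield_facts) r) => e a _; rewrite e.
apply: eq_big_seq => t /mem_TL [altt yt].
have [l [nd [hin ->]]] := HA t altt.
rewrite -big_filter; apply: sum_same.
- by rewrite filter_uniq ?uniq_Xl.
- exact: NoDup_uniq.
move=> r; rewrite mem_filter; apply/idP/idP.
  case/andP => /eqP lr /mem_Xl [vr yr]; apply/In_mem; apply/hin; split => //.
move/In_mem/hin => [vr lr]; rewrite lr eqxx /=; apply/mem_Xl; split => //.
by case: ((proj2 yield_facts) r) => e _ _; rewrite -e lr.
Qed.

End Main.

Theorem proposition6p11 (K : comNzSemiRingType) (D : finType)
    (S : text D -> K) :
  regular_text_series S ->
  exists T : seq D -> K, proj_is S T /\ algebraic T.
Proof.
move=> [A HA]; exists (@Xs K D A); split.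
  move=> w; exists (TL w); split; first exact: uniq_NoDup (uniq_TL w).
  split; last exact: Xs_proj.
  by move=> t; rewrite In_mem; apply: mem_TL.
exists (option (bool * wQ A * wQ A) : finType), (@Psys K D A), (@SX K D A), None.
split; first exact: Psys_proper.
split; first exact: SX_sol.
split => //.
by move=> [[[[] p] q]|]; rewrite /quasiregular /= ?Bs0 ?Ms0 ?Xs0.
Qed.
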